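(* Fix $\gamma\in\mathbb{R}$. Let $G$ be the directed graph whose vertices are the species $1,\dots,s_0$, with a directed edge from $i$ to $j$ whenever there is a reaction $k$ with $\zeta_{ik}<0$ and $\zeta_{jk}>0$, and let $G_1,\dots,G_p$ be its maximal strongly connected subgraphs (single vertices count as strongly connected). Let $\theta\in[0,\infty)^{s_0}$ and write $\theta=\sum_{j=1}^m\theta^j$ with $\theta^j\in[0,\infty)^{s_0}$, where $\mathrm{supp}(\theta^j)$ is contained in the vertex set of a maximal strongly connected subgraph $G_{i_j}$ and $G_{i_j}\ne G_{i_l}$ for $j\neq l$. Then: (i) if Condition 3.2 holds at $\gamma$ for each $\theta^j$, it holds at $\gamma$ for $\theta$; (ii) if the balance equation (B) holds for each $\theta^j$, then (B) holds for $\theta$; (iii) if the time-scale constraint (T) at $\gamma$ holds for each $\theta^j$, then (T) at $\gamma$ holds for $\theta$. Consequently, if Condition 3.2 (resp. (B), resp. (T) at $\gamma$) holds for every $\theta\in[0,\infty)^{s_0}$ whose support lies in the vertex set of some strongly connected subgraph of $G$, then it holds for every $\theta\in[0,\infty)^{s_0}$.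
   Context: Fix integers $s_0,r_0\ge 1$ and, for $k=1,\dots,r_0$, vectors $\nu_k,\nu_k'\in\mathbb{N}^{s_0}$ (reactant and product vectors of reaction $k$); set $\zeta_k=\nu_k'-\nu_k$. Fix $\alpha\in[0,\infty)^{s_0}$ and $\beta\in\mathbb{R}^{r_0}$ and set $\rho_k=\beta_k+\nu_k\cdot\alpha$. For $\theta\in[0,\infty)^{s_0}$ let $\Gamma_\theta^+=\{k:\theta\cdot\zeta_k>0\}$, $\Gamma_\theta^-=\{k:\theta\cdot\zeta_k<0\}$ and $\mathrm{supp}(\theta)=\{i:\theta_i>0\}$. A maximum over the empty set is $-\infty$. For $\theta\in[0,\infty)^{s_0}$ and $\gamma\in\mathbb{R}$: the balance equation for $\theta$ is (B) $\max_{k\in\Gamma_\theta^-}\rho_k=\max_{k\in\Gamma_\theta^+}\rho_k$; the time-scale constraint for $\theta$ at $\gamma$ is (T) $\gamma\le\max_{i:\theta_i>0}\alpha_i-\max_{k\in\Gamma_\theta^+\cup\Gamma_\theta^-}\rho_k$; Condition 3.2 holds for $\theta$ at $\gamma$ if (B) or (T) holds. *)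

(* Defs.v *)
(* Reaction-network data over an arbitrary real field R
   (the paper uses R = the reals; the statement is purely order-algebraic). *)
From HB Require Import structures.
From mathcomp Require Import all_boot all_order all_algebra.
Set Implicit Arguments. Unset Strict Implicit. Unset Printing Implicit Defensive.
Import Order.TTheory GRing.Theory Num.Theory.
Local Open Scope ring_scope.

(* Maximum of a finite list, with None standing for -infinity (max of []). *)
Definition omax (R : realDomainType) (s : seq R) : option R :=
  foldr (fun x o => Some (match o with None => x | Some y => Num.max x y end))
        None s.

Definition omax_over (T : finType) (R : realDomainType) (P : pred T) (f : T -> R)
  : option R := omax [seq f k | k <- enum P].

Section Network.
Variables (R : realFieldType) (s0 r0 : nat).
(* nu k i, nu' k i : reactant / product coefficient of species i in reaction k *)
Variables (nu nu' : 'I_r0 -> 'I_s0 -> nat).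
Variables (alpha : 'I_s0 -> R) (beta : 'I_r0 -> R).

Definition zeta (i : 'I_s0) (k : 'I_r0) : int := (nu' k i)%:Z - (nu k i)%:Z.

Definition dotz (theta : 'I_s0 -> R) (k : 'I_r0) : R :=
  \sum_(i < s0) theta i * (zeta i k)%:~R.

Definition rho (k : 'I_r0) : R := beta k + \sum_(i < s0) (nu k i)%:R * alpha i.

Definition Gamma_plus (theta : 'I_s0 -> R) : pred 'I_r0 :=
  fun k => 0 < dotz theta k.
Definition Gamma_minus (theta : 'I_s0 -> R) : pred 'I_r0 :=
  fun k => dotz theta k < 0.
Definition supp (theta : 'I_s0 -> R) : pred 'I_s0 := fun i => 0 < theta i.

Definition balance (theta : 'I_s0 -> R) : Prop :=
  omax_over (Gamma_minus theta) rho = omax_over (Gamma_plus theta) rho.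

(* (T): gamma <= max_{supp} alpha - max_{Gamma+ u Gamma-} rho, in extended
   arithmetic: x - (-oo) = +oo (so (T) holds when Gamma+ u Gamma- is empty),
   and (-oo) - r = -oo for finite r. *)
Definition timescale (gamma : R) (theta : 'I_s0 -> R) : Prop :=
  match omax_over (supp theta) alpha,
        omax_over (predU (Gamma_plus theta) (Gamma_minus theta)) rho with
  | _, None => True
  | Some a, Some r => gamma <= a - r
  | None, Some _ => False
  end.

Definition cond32 (gamma : R) (theta : 'I_s0 -> R) : Prop :=
  balance theta \/ timescale gamma theta.

Definition sgraph : rel 'I_s0 :=
  fun i j => [exists k : 'I_r0, (zeta i k < 0) && (0 < zeta j k)].

Definition same_scc (i j : 'I_s0) : bool :=
  connect sgraph i j && connect sgraph j i.

End Network.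

(* Main.v *)
Require Import Defs.
From HB Require Import structures.
From mathcomp Require Import all_boot all_order all_algebra.
Set Warnings "-all".
Set Implicit Arguments. Unset Strict Implicit. Unset Printing Implicit Defensive.
From Stdlib Require Import Classical.
Import Order.TTheory GRing.Theory Num.Theory.
Local Open Scope ring_scope.

Lemma omax_SomeP (R : realDomainType) (s : seq R) x :
  omax s = Some x -> x \in s /\ forall y, y \in s -> y <= x.
Proof.
elim: s x => [|a s IH] x //= [<-].
case E: (omax s) => [z|].
  have [zs zmax] := IH z E.
  split.
    rewrite /Num.max; case: ifP => _; by rewrite inE ?zs ?eqxx ?orbT.
  move=> y; rewrite inE => /orP[/eqP->|/zmax yz]; first by rewrite le_max lexx.
  by rewrite le_max yz orbT.
have s0 : s = [::] by case: s E IH => //= b s; case: (omax s).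
subst s; split; first by rewrite inE.
by move=> y; rewrite inE => /eqP->.
Qed.

Lemma omax_None (R : realDomainType) (s : seq R) : omax s = None -> s = [::].
Proof. by case: s. Qed.

Lemma omax_intro (R : realDomainType) (s : seq R) x :
  x \in s -> (forall y, y \in s -> y <= x) -> omax s = Some x.
Proof.
move=> xs xm; case E: (omax s) => [z|]; last by move/omax_None: E => E; rewrite E in xs.
have [zs zm] := omax_SomeP E.
by congr Some; apply/eqP; rewrite eq_le zm // xm.
Qed.

Lemma omax_overP (T : finType) (R : realDomainType) (P : pred T) (f : T -> R) x :
  omax_over P f = Some x <->
  ((exists2 k, P k & f k = x) /\ forall k, P k -> f k <= x).
Proof.
rewrite /omax_over; split.
  move/omax_SomeP=> [/mapP[k kP ->] H]; rewrite mem_enum in kP; split; first by exists k.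
  by move=> k' Pk; apply: H; apply: map_f; rewrite mem_enum.
move=> [[k Pk <-] H]; apply: omax_intro; first by apply: map_f; rewrite mem_enum.
by move=> y /mapP[k' ]; rewrite mem_enum => /H ? ->.
Qed.

Lemma omax_over_None (T : finType) (R : realDomainType) (P : pred T) (f : T -> R) :
  omax_over P f = None <-> (forall k, ~~ P k).
Proof.
rewrite /omax_over; split.
  move/omax_None=> E k; apply/negP=> Pk.
  have : f k \in [seq f k | k <- enum P] by apply: map_f; rewrite mem_enum.
  by rewrite E.
move=> H; suff -> : enum P = [::] by [].
case E: (enum P) => [|k s] //; have : k \in enum P by rewrite E inE eqxx.
by rewrite mem_enum => Pk; case/negP: (H k).
Qed.

Lemma omax_over_cases (T : finType) (R : realDomainType) (P : pred T) (f : T -> R) :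
  (forall k, ~~ P k) \/ exists x, omax_over P f = Some x.
Proof.
case E: (omax_over P f) => [x|]; first by right; exists x.
by left; apply/(omax_over_None P f).
Qed.
Section Core.
Variables (R : realFieldType) (s0 r0 : nat) (nu nu' : 'I_r0 -> 'I_s0 -> nat).
Variables (alpha : 'I_s0 -> R) (beta : 'I_r0 -> R) (gamma : R).

Local Notation dz := (dotz nu nu').
Local Notation Gp := (Gamma_plus nu nu').
Local Notation Gm := (Gamma_minus nu nu').
Local Notation rh := (rho nu alpha beta).
Local Notation E := (sgraph nu nu').

Lemma neg_term (t : 'I_s0 -> R) k : (forall i, 0 <= t i) -> dz t k < 0 ->
  exists i, 0 < t i /\ (zeta nu nu' i k < 0)%R.
Proof.
move=> t0 H.
case: (boolP [exists i, t i * (zeta nu nu' i k)%:~R < 0]) => [/existsP[i Hi]|/existsPn N].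
  exists i; have ti : 0 < t i.
    rewrite lt_neqAle t0 andbT; apply/negP => /eqP ti0.
    by move: Hi; rewrite -ti0 mul0r ltxx.
  by split=> //; move: Hi; rewrite pmulr_rlt0 // ltrz0.
exfalso; move: H; apply/negP; rewrite -leNgt; apply: sumr_ge0 => i _.
by move: (N i); rewrite -leNgt.
Qed.

Lemma pos_term (t : 'I_s0 -> R) k : (forall i, 0 <= t i) -> 0 < dz t k ->
  exists i, 0 < t i /\ (0 < zeta nu nu' i k)%R.
Proof.
move=> t0 H.
case: (boolP [exists i, 0 < t i * (zeta nu nu' i k)%:~R]) => [/existsP[i Hi]|/existsPn N].
  exists i; have ti : 0 < t i.
    rewrite lt_neqAle t0 andbT; apply/negP => /eqP ti0.
    by move: Hi; rewrite -ti0 mul0r ltxx.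
  by split=> //; move: Hi; rewrite pmulr_rgt0 // ltr0z.
exfalso; move: H; apply/negP; rewrite -leNgt; apply: sumr_le0 => i _.
by move: (N i); rewrite -leNgt.
Qed.

Variables (J : finType) (theta : 'I_s0 -> R) (th : J -> 'I_s0 -> R) (c : J -> 'I_s0).
Hypothesis th0 : forall j i, 0 <= th j i.
Hypothesis thsum : forall i, theta i = \sum_j th j i.
Hypothesis thscc : forall j i, 0 < th j i -> same_scc nu nu' (c j) i.
Hypothesis thdist : forall j l, j != l -> (exists i, 0 < th j i) ->
  (exists i, 0 < th l i) -> ~~ same_scc nu nu' (c j) (c l).

Lemma dz_sum k : dz theta k = \sum_j dz (th j) k.
Proof.
rewrite /dotz; under eq_bigr => i _ do rewrite thsum mulr_suml.
exact: exchange_big.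
Qed.

Definition U j : pred 'I_r0 := predU (Gp (th j)) (Gm (th j)).

Lemma theta_pos k : 0 < dz theta k -> exists j, 0 < dz (th j) k.
Proof.
move=> H; case: (boolP [exists j, 0 < dz (th j) k]) => [/existsP[j Hj]|/existsPn N].
  by exists j.
exfalso; move: H; apply/negP; rewrite -leNgt dz_sum; apply: sumr_le0 => j _.
by move: (N j); rewrite -leNgt.
Qed.

Lemma theta_neg k : dz theta k < 0 -> exists j, dz (th j) k < 0.
Proof.
move=> H; case: (boolP [exists j, dz (th j) k < 0]) => [/existsP[j Hj]|/existsPn N].
  by exists j.
exfalso; move: H; apply/negP; rewrite -leNgt dz_sum; apply: sumr_ge0 => j _.
by move: (N j); rewrite -leNgt.
Qed.

Lemma theta_U k : predU (Gp theta) (Gm theta) k -> exists j, U j k.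
Proof.
rewrite /= /Gamma_plus /Gamma_minus => /orP[/theta_pos|/theta_neg] [j Hj];
  by exists j; rewrite /U /= /Gamma_plus /Gamma_minus Hj ?orbT.
Qed.

Lemma theta_supp j i : 0 < th j i -> 0 < theta i.
Proof.
move=> H; rewrite thsum (bigD1 j) //=; apply: (lt_le_trans H).
by rewrite lerDl sumr_ge0.
Qed.

Lemma edge j l k : dz (th j) k < 0 -> 0 < dz (th l) k -> connect E (c j) (c l).
Proof.
move=> /(neg_term (th0 j)) [i [ti zi]] /(pos_term (th0 l)) [i' [ti' zi']].
have /andP[cji _] := thscc ti; have /andP[_ ci'l] := thscc ti'.
apply: connect_trans cji _; apply: connect_trans ci'l.
by apply: connect1; apply/existsP; exists k; rewrite zi zi'.
Qed.

Lemma edge_strict j l k : dz (th j) k < 0 -> 0 < dz (th l) k ->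
  ~~ connect E (c l) (c j).
Proof.
move=> Hj Hl; have cjl := edge Hj Hl.
have jl : j != l.
  by apply/eqP=> ejl; subst l; move: (lt_trans Hj Hl); rewrite ltxx.
have := thdist jl.
have [i [ti _]] := neg_term (th0 j) Hj; have [i' [ti' _]] := pos_term (th0 l) Hl.
move=> /(_ (ex_intro _ i ti) (ex_intro _ i' ti')).
by rewrite /same_scc cjl.
Qed.

Lemma ex_min (P : pred J) (f : J -> nat) j0 : P j0 ->
  exists2 j, P j & forall l, P l -> (f j <= f l)%N.
Proof.
move=> Pj0; case: (@arg_minnP J j0 P f Pj0) => j Pj H; by exists j.
Qed.

Lemma sum_neg_ex j k : dz (th j) k < 0 -> 0 <= dz theta k ->
  exists l, 0 < dz (th l) k.
Proof.
move=> Hj H; case: (boolP [exists l, 0 < dz (th l) k]) => [/existsP[l Hl]|/existsPn N].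
  by exists l.
exfalso; move: H; apply/negP; rewrite -ltNge dz_sum (bigD1 j) //=.
apply: (le_lt_trans (y := dz (th j) k + 0)); last by rewrite addr0.
by rewrite lerD2l; apply: sumr_le0 => l _; move: (N l); rewrite -leNgt.
Qed.

Lemma sum_pos_ex j k : 0 < dz (th j) k -> dz theta k <= 0 ->
  exists l, dz (th l) k < 0.
Proof.
move=> Hj H; case: (boolP [exists l, dz (th l) k < 0]) => [/existsP[l Hl]|/existsPn N].
  by exists l.
exfalso; move: H; apply/negP; rewrite -ltNge dz_sum (bigD1 j) //=.
apply: (lt_le_trans (y := dz (th j) k + 0)); first by rewrite addr0.
by rewrite lerD2l; apply: sumr_ge0 => l _; move: (N l); rewrite -leNgt.
Qed.

Lemma core_balance :
  (forall j k, U j k -> (forall j' k', U j' k' -> rh k' <= rh k) ->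
     balance nu nu' alpha beta (th j)) ->
  balance nu nu' alpha beta theta.
Proof.
move=> HB.
pose W := [pred k | [exists j, U j k]].
have thW : forall k, predU (Gp theta) (Gm theta) k -> W k.
  by move=> k /theta_U [j Hj]; apply/existsP; exists j.
case: (omax_over_cases W rh) => [W0 | [M /omax_overP [[k0 Wk0 rk0] Wmax]]].
  rewrite /balance.
  have -> : omax_over (Gm theta) rh = None.
    apply/omax_over_None => k; apply/negP => Hk; move/negP: (W0 k); apply.
    by apply: thW; rewrite /= Hk orbT.
  have -> : omax_over (Gp theta) rh = None.
    apply/omax_over_None => k; apply/negP => Hk; move/negP: (W0 k); apply.
    by apply: thW; rewrite /= Hk.
  by [].
have UW : forall j k, U j k -> W k by move=> j k Hk; apply/existsP; exists j.
pose S := [pred j | [exists k, U j k && (rh k == M)]].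
have balS : forall j k, U j k -> rh k = M ->
   (exists2 k, Gm (th j) k & rh k = M) /\ (exists2 k, Gp (th j) k & rh k = M).
  move=> j k Ujk rkM.
  have Bj := HB j k Ujk (fun j' k' Uk' => (eq_ind_r (fun y => rh k' <= y)
                                              (Wmax k' (UW _ _ Uk')) rkM)).
  case: (omax_over_cases (Gm (th j)) rh) => [Gm0 | [x Hx]].
    exfalso.
    have Hn : omax_over (Gm (th j)) rh = None by apply/omax_over_None.
    rewrite /balance Hn in Bj; move/esym/omax_over_None: Bj => Gp0.
    by move: Ujk; rewrite /U /= (negbTE (Gm0 k)) (negbTE (Gp0 k)).
  have Hx' : omax_over (Gp (th j)) rh = Some x by rewrite -Bj.
  move/omax_overP: Hx => [[km Gkm rkm] mx].
  move/omax_overP: Hx' => [[kp Gkp rkp] mx'].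
  have xM : x <= M by rewrite -rkm; apply: Wmax; apply: (UW j); rewrite /U /= Gkm orbT.
  have Mx : M <= x.
    by rewrite -rkM; move: Ujk; rewrite /U /= => /orP[/mx'|/mx].
  have eMx : x = M by apply/eqP; rewrite eq_le xM Mx.
  by split; [exists km | exists kp]; rewrite ?rkm ?rkp.
have [j0 Uj0] : exists j, U j k0 by move/existsP: Wk0.
have Sj0 : S j0 by apply/existsP; exists k0; rewrite Uj0 rk0 eqxx.
have inS : forall l k, U l k -> rh k = M -> S l.
  by move=> l k Ulk rkM; apply/existsP; exists k; rewrite Ulk rkM eqxx.
have memS : forall j, S j -> exists2 k, U j k & rh k = M.
  by move=> j /existsP[k /andP[Hk /eqP Hr]]; exists k.
have [km Gkm rkm] : exists2 k, Gm theta k & rh k = M.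
  have [j Sj jmin] := ex_min (fun j => #|[set x | connect E (c j) x]|) Sj0.
  have [k Ujk rk] := memS j Sj.
  have [[km Gkm rkm] _] := balS j k Ujk rk.
  exists km => //; rewrite /Gamma_minus.
  case: (ltP (dz theta km) 0) => // H0.
  have [l Hl] := sum_neg_ex Gkm H0.
  have Sl : S l by apply: (inS l km) => //; rewrite /U /= /Gamma_plus Hl.
  have := jmin l Sl; rewrite leqNgt => /negP; case.
  apply: proper_card; apply/properP; split.
    apply/subsetP => x; rewrite !inE; apply: connect_trans; exact: edge Gkm Hl.
  exists (c j); first by rewrite inE connect0.
  by rewrite inE; apply: edge_strict Gkm Hl.
have [kp Gkp rkp] : exists2 k, Gp theta k & rh k = M.
  have [j Sj jmin] := ex_min (fun j => #|[set x | connect E x (c j)]|) Sj0.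
  have [k Ujk rk] := memS j Sj.
  have [_ [kp Gkp rkp]] := balS j k Ujk rk.
  exists kp => //; rewrite /Gamma_plus.
  case: (ltP 0 (dz theta kp)) => // H0.
  have [l Hl] := sum_pos_ex Gkp H0.
  have Sl : S l by apply: (inS l kp) => //; rewrite /U /= /Gamma_minus Hl orbT.
  have := jmin l Sl; rewrite leqNgt => /negP; case.
  apply: proper_card; apply/properP; split.
    apply/subsetP => x; rewrite !inE => H; apply: connect_trans H _; exact: edge Hl Gkp.
  exists (c j); first by rewrite inE connect0.
  by rewrite inE; apply: edge_strict Hl Gkp.
rewrite /balance.
have -> : omax_over (Gm theta) rh = Some M.
  apply/omax_overP; split; first by exists km.
  by move=> k Hk; apply: Wmax; apply: thW; rewrite /= Hk orbT.
have -> : omax_over (Gp theta) rh = Some M.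
  apply/omax_overP; split; first by exists kp.
  by move=> k Hk; apply: Wmax; apply: thW; rewrite /= Hk.
by [].
Qed.

Lemma Tj j k : U j k -> timescale nu nu' alpha beta gamma (th j) ->
  exists a, omax_over (supp theta) alpha = Some a /\ gamma <= a - rh k.
Proof.
move=> Ujk; rewrite /timescale.
case Hr: (omax_over (predU (Gp (th j)) (Gm (th j))) rh) => [r|]; last first.
  by move/omax_over_None: Hr => /(_ k); rewrite -/(U j k) Ujk.
move/omax_overP: Hr => [_ rmax].
case Ha: (omax_over (supp (th j)) alpha) => [aj|] // Hg.
move/omax_overP: Ha => [[i si ai] _].
have sti : supp theta i by rewrite /supp; apply: (theta_supp (j := j)).
case: (omax_over_cases (supp theta) alpha) => [N|[a Ha]].
  by move: (N i); rewrite sti.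
exists a; split => //; move/omax_overP: Ha => [_ amax].
apply: (le_trans Hg); apply: lerB; first by rewrite -ai; exact: amax.
exact: rmax.
Qed.

Lemma core_timescale : (forall j, timescale nu nu' alpha beta gamma (th j)) ->
  timescale nu nu' alpha beta gamma theta.
Proof.
move=> H; rewrite /timescale.
case Hr: (omax_over (predU (Gp theta) (Gm theta)) rh) => [r|]; last by case: (omax_over (supp theta) alpha).
move/omax_overP: Hr => [[k Hk rk] _].
have [j Uj] := theta_U Hk.
have [a [Ha Hg]] := Tj Uj (H j).
by rewrite Ha -rk.
Qed.

Lemma core_cond : (forall j, cond32 nu nu' alpha beta gamma (th j)) ->
  cond32 nu nu' alpha beta gamma theta.
Proof.
move=> H; case: (classic (timescale nu nu' alpha beta gamma theta)) => [T|nT].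
  by right.
left; apply: core_balance => j k Ujk kmax.
case: (H j) => // Tj'; exfalso; apply: nT.
rewrite /timescale.
case Hr: (omax_over (predU (Gp theta) (Gm theta)) rh) => [r|]; last by case: (omax_over (supp theta) alpha).
move/omax_overP: Hr => [[k' Hk' rk'] _].
have [j' Uj'] := theta_U Hk'.
have [a [Ha Hg]] := Tj Ujk Tj'.
rewrite Ha; apply: (le_trans Hg); apply: lerB => //.
by rewrite -rk'; apply: (kmax j').
Qed.

End Core.

Section Decomp.
Variables (R : realFieldType) (s0 r0 : nat) (nu nu' : 'I_r0 -> 'I_s0 -> nat).
Local Notation scc := (same_scc nu nu').

Lemma scc_refl i : scc i i.
Proof. by rewrite /same_scc connect0. Qed.
Lemma scc_sym i j : scc i j -> scc j i.
Proof. by rewrite /same_scc andbC. Qed.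
Lemma scc_trans i j k : scc i j -> scc j k -> scc i k.
Proof.
move=> /andP[a b] /andP[c d]; apply/andP; split.
  exact: connect_trans a c.
exact: connect_trans d b.
Qed.

Definition isrep (j i : 'I_s0) : bool :=
  scc j i && [forall x, scc x i ==> (val j <= val x)%N].

Lemma rep_ex i : exists j, isrep j i.
Proof.
have [j Pj jmin] := ex_min (P := [pred x | scc x i]) val (scc_refl i).
exists j; rewrite /isrep; apply/andP; split => //; apply/forallP => x; apply/implyP => Hx.
exact: jmin.
Qed.

Lemma rep_uniq i j j' : isrep j i -> isrep j' i -> j = j'.
Proof.
move=> /andP[sj /forallP mj] /andP[sj' /forallP mj'].
apply: val_inj; apply/eqP; rewrite eqn_leq.
by rewrite (implyP (mj j') sj') (implyP (mj' j) sj).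
Qed.

Variable theta : 'I_s0 -> R.
Hypothesis theta0 : forall i, 0 <= theta i.

Definition thr (j i : 'I_s0) : R := if isrep j i then theta i else 0.

Lemma thr0 j i : 0 <= thr j i.
Proof. by rewrite /thr; case: ifP. Qed.

Lemma thr_sum i : theta i = \sum_j thr j i.
Proof.
have [r Hr] := rep_ex i.
rewrite (bigD1 r) //= big1 ?addr0; first by rewrite /thr Hr.
move=> j jr; rewrite /thr; case: ifP => // Hj.
by move: jr; rewrite (rep_uniq Hj Hr) eqxx.
Qed.

Lemma thr_rep j i : 0 < thr j i -> isrep j i.
Proof. by rewrite /thr; case: ifP => // _; rewrite ltxx. Qed.

Lemma thr_scc j i : 0 < thr j i -> scc j i.
Proof. by move/thr_rep/andP=> []. Qed.

Lemma thr_dist j l : j != l -> (exists i, 0 < thr j i) ->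
  (exists i, 0 < thr l i) -> ~~ scc j l.
Proof.
move=> jl [i /thr_rep Hi] [i' /thr_rep Hi']; apply/negP => sjl.
have Hji' : isrep j i'.
  move: Hi => /andP[sji /forallP mj]; move: (Hi') => /andP[sli' _].
  rewrite /isrep (scc_trans sjl sli') /=; apply/forallP => x; apply/implyP => sx.
  apply: (implyP (mj x)); apply: scc_trans sx _.
  apply: scc_trans (scc_sym sli') _; apply: scc_trans (scc_sym sjl) sji.
by move: jl; rewrite (rep_uniq Hji' Hi') eqxx.
Qed.

End Decomp.

Theorem lemma3p4 (R : realFieldType) (s0 r0 : nat)
  (nu nu' : 'I_r0 -> 'I_s0 -> nat) (alpha : 'I_s0 -> R) (beta : 'I_r0 -> R)
  (gamma : R) :
  (0 < s0)%N -> (0 < r0)%N -> (forall i, 0 <= alpha i) ->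
  (forall (theta : 'I_s0 -> R), (forall i, 0 <= theta i) ->
   forall (m : nat) (th : 'I_m -> 'I_s0 -> R) (c : 'I_m -> 'I_s0),
     (forall j i, 0 <= th j i) ->
     (forall i, theta i = \sum_(j < m) th j i) ->
     (* supp(theta^j) is contained in the SCC of the vertex c j *)
     (forall j i, 0 < th j i -> same_scc nu nu' (c j) i) ->
     (* the SCCs G_{i_j} are pairwise distinct *)
     (forall j l, j != l -> ~~ same_scc nu nu' (c j) (c l)) ->
     [/\ (forall j, cond32 nu nu' alpha beta gamma (th j)) ->
           cond32 nu nu' alpha beta gamma theta,
         (forall j, balance nu nu' alpha beta (th j)) ->
           balance nu nu' alpha beta theta &
         (forall j, timescale nu nu' alpha beta gamma (th j)) ->
           timescale nu nu' alpha beta gamma theta])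
  /\
  [/\ (forall theta : 'I_s0 -> R, (forall i, 0 <= theta i) ->
         (exists v, forall i, 0 < theta i -> same_scc nu nu' v i) ->
         cond32 nu nu' alpha beta gamma theta) ->
       forall theta : 'I_s0 -> R, (forall i, 0 <= theta i) ->
         cond32 nu nu' alpha beta gamma theta,
      (forall theta : 'I_s0 -> R, (forall i, 0 <= theta i) ->
         (exists v, forall i, 0 < theta i -> same_scc nu nu' v i) ->
         balance nu nu' alpha beta theta) ->
       forall theta : 'I_s0 -> R, (forall i, 0 <= theta i) ->
         balance nu nu' alpha beta theta &
      (forall theta : 'I_s0 -> R, (forall i, 0 <= theta i) ->
         (exists v, forall i, 0 < theta i -> same_scc nu nu' v i) ->
         timescale nu nu' alpha beta gamma theta) ->
       forall theta : 'I_s0 -> R, (forall i, 0 <= theta i) ->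
         timescale nu nu' alpha beta gamma theta].
Proof.
move=> _ _ _; split.
  move=> theta _ m th c th0 ths thscc thd.
  have thd' : forall j l, j != l -> (exists i, 0 < th j i) ->
      (exists i, 0 < th l i) -> ~~ same_scc nu nu' (c j) (c l).
    by move=> j l jl _ _; exact: thd.
  split.
  - exact: (core_cond th0 ths thscc thd').
  - by move=> H; apply: (core_balance th0 ths thscc thd') => j *; apply: H.
  - exact: (core_timescale th0 ths).
have dec := fun theta (t0 : forall i, 0 <= theta i) =>
  (@thr0 R s0 r0 nu nu' theta t0, thr_sum nu nu' theta,
   @thr_scc R s0 r0 nu nu' theta, @thr_dist R s0 r0 nu nu' theta).
split.
- move=> H theta t0; have [[[a b] d] e] := dec theta t0.
  apply: (core_cond (c := id) a b d e) => j.
  by apply: H; [exact: thr0 | exists j; exact: d].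
- move=> H theta t0; have [[[a b] d] e] := dec theta t0.
  apply: (core_balance (c := id) a b d e) => j k _ _.
  by apply: H; [exact: thr0 | exists j; exact: d].
- move=> H theta t0; have [[[a b] d] e] := dec theta t0.
  apply: (core_timescale a b) => j.
  by apply: H; [exact: thr0 | exists j; exact: d].
Qed.
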